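(* Let $X$ be a nontrivial real Banach space. The following assertions are equivalent: (i) $X^*$ has the weak$^*$ strong diameter $2$ property; (ii) $X$ is octahedral; (iii) whenever $E$ is a finite-dimensional subspace of $X$, $n\in\mathbb{N}$, $x_1^*,\dots,x_n^*\in B_{X^*}$, $\varepsilon>0$, and $\varepsilon_0\in(0,\varepsilon)$, there is a $y\in S_X$ such that, whenever $|\gamma_i|\leq 1+\varepsilon_0$ for $i\in\{1,\dots,n\}$, there are $y_i^*\in X^*$ satisfying $y_i^*|_E=x_i^*|_E$, $y_i^*(y)=\gamma_i$, and $\|y_i^*\|\leq 1+\varepsilon$ for all $i\in\{1,\dots,n\}$; (iii') whenever $E$ is a finite-dimensional subspace of $X$, $n\in\mathbb{N}$, $x_1^*,\dots,x_n^*\in B_{X^*}$, and $\varepsilon>0$, there are $y\in S_X$ and $x_{1i}^*,x_{2i}^*\in X^*$, $i\in\{1,\dots,n\}$, satisfying $x_{1i}^*|_E=x_{2i}^*|_E=x_i^*|_E$, $x_{1i}^*(y)-x_{2i}^*(y)>2-\varepsilon$, and $\|x_{1i}^*\|,\|x_{2i}^*\|\leq 1+\varepsilon$ for all $i\in\{1,\dots,n\}$.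
   Context: $B_Z$, $S_Z$ denote the closed unit ball and unit sphere of a Banach space $Z$. A weak$^*$ slice of $B_{X^*}$ is a set $\{x^*\in B_{X^*}: x^*(x)>1-\alpha\}$ with $x\in S_X$, $\alpha>0$. $X^*$ has the weak$^*$ strong diameter $2$ property if every convex combination $\sum_{i=1}^n\lambda_i S_i$ ($n\in\mathbb{N}$, $\lambda_i\ge0$, $\sum\lambda_i=1$, $S_i$ weak$^*$ slices of $B_{X^*}$) has diameter $2$. $X$ is octahedral if for every finite-dimensional subspace $E$ of $X$ and every $\varepsilon>0$ there is a $y\in S_X$ such that $\|x+y\|\geq(1-\varepsilon)(\|x\|+\|y\|)$ for all $x\in E$. *)

(* Defs.v *)
From HB Require Import structures.
From mathcomp Require Import all_boot all_order all_algebra.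
From mathcomp Require Import all_classical all_reals all_analysis.
Set Implicit Arguments. Unset Strict Implicit. Unset Printing Implicit Defensive.
Import Order.TTheory GRing.Theory Num.Theory.
Import numFieldNormedType.Exports.
Local Open Scope classical_set_scope.
Local Open Scope ring_scope.

Section Dual.
Context {R : realType} {V : normedModType R}.

Definition is_dual (f : V -> R) : Prop :=
  (forall (a : R) (x y : V), f (a *: x + y) = a * f x + f y) /\ continuous f.

Definition dnorm (f : V -> R) : R :=
  sup [set `|f x| | x in [set x : V | `|x| <= 1]].

Definition dual_ball : set (V -> R) := [set f | is_dual f /\ dnorm f <= 1].

Definition wstar_slice (x : V) (alpha : R) : set (V -> R) :=
  [set f | dual_ball f /\ f x > 1 - alpha].

Definition conv_comb (n : nat) (lambda : 'I_n -> R) (S : 'I_n -> set (V -> R))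
  : set (V -> R) :=
  [set h | exists f : 'I_n -> (V -> R), (forall i, S i (f i)) /\
           h = (fun v => \sum_(i < n) lambda i * f i v)].

Definition ddiam (C : set (V -> R)) : R :=
  sup [set d | exists f g, C f /\ C g /\ d = dnorm (fun v => f v - g v)].

Definition wstar_SD2P : Prop :=
  forall (n : nat) (lambda : 'I_n -> R) (x : 'I_n -> V) (alpha : 'I_n -> R),
    (forall i, 0 <= lambda i) -> \sum_(i < n) lambda i = 1 ->
    (forall i, `|x i| = 1) -> (forall i, 0 < alpha i) ->
    ddiam (conv_comb lambda (fun i => wstar_slice (x i) (alpha i))) = 2.

(* Finite-dimensional subspaces are the linear spans of finite families. *)
Definition span_of (m : nat) (e : 'I_m -> V) : set V :=
  [set x | exists c : 'I_m -> R, x = \sum_(j < m) c j *: e j].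

Definition octahedral : Prop :=
  forall (m : nat) (e : 'I_m -> V) (eps : R), 0 < eps ->
    exists y : V, `|y| = 1 /\
      forall x, span_of e x -> `|x + y| >= (1 - eps) * (`|x| + `|y|).

Definition prop_iii : Prop :=
  forall (m : nat) (e : 'I_m -> V) (n : nat) (xs : 'I_n -> (V -> R))
         (eps eps0 : R),
    (forall i, dual_ball (xs i)) -> 0 < eps -> 0 < eps0 -> eps0 < eps ->
    exists y : V, `|y| = 1 /\
      forall gamma : 'I_n -> R, (forall i, `|gamma i| <= 1 + eps0) ->
        exists ys : 'I_n -> (V -> R), forall i,
          is_dual (ys i) /\ (forall z, span_of e z -> ys i z = xs i z) /\
          ys i y = gamma i /\ dnorm (ys i) <= 1 + eps.

Definition prop_iii' : Prop :=
  forall (m : nat) (e : 'I_m -> V) (n : nat) (xs : 'I_n -> (V -> R)) (eps : R),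
    (forall i, dual_ball (xs i)) -> 0 < eps ->
    exists (y : V) (x1 x2 : 'I_n -> (V -> R)), `|y| = 1 /\
      forall i,
        is_dual (x1 i) /\ is_dual (x2 i) /\
        (forall z, span_of e z -> x1 i z = xs i z /\ x2 i z = xs i z) /\
        x1 i y - x2 i y > 2 - eps /\
        dnorm (x1 i) <= 1 + eps /\ dnorm (x2 i) <= 1 + eps.

End Dual.

(* Main.v *)
Require Import Defs.
From HB Require Import structures.
From mathcomp Require Import all_boot all_order all_algebra.
From mathcomp Require Import all_classical all_reals all_analysis.
From mathcomp Require Import ring lra.
Import Order.TTheory GRing.Theory Num.Theory.
Import numFieldNormedType.Exports.
Local Open Scope classical_set_scope.
Local Open Scope ring_scope.

Section Basics.
Context {R : realType} {V : normedModType R}.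
Implicit Types (f : V -> R).

Definition islin f := forall (a : R) (x y : V), f (a *: x + y) = a * f x + f y.

Lemma lin0 f : islin f -> f 0 = 0.
Proof.
move=> h; have := h 1 0 0; rewrite scaler0 addr0 mul1r => H; lra.
Qed.

Lemma linZ f : islin f -> forall a x, f (a *: x) = a * f x.
Proof. by move=> h a x; have := h a x 0; rewrite addr0 lin0 // addr0. Qed.

Lemma linD f : islin f -> forall x y, f (x + y) = f x + f y.
Proof. by move=> h x y; have := h 1 x y; rewrite scale1r mul1r. Qed.

Lemma linN f : islin f -> forall x, f (- x) = - f x.
Proof. by move=> h x; rewrite -scaleN1r linZ // mulN1r. Qed.

Lemma linB f : islin f -> forall x y, f (x - y) = f x - f y.
Proof. by move=> h x y; rewrite linD // linN. Qed.

Lemma dual_lin {f} : is_dual f -> islin f.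
Proof. by case. Qed.

Lemma bound_cont f (c : R) : islin f -> (forall x, `|f x| <= c * `|x|) ->
  continuous f.
Proof.
move=> hl hb x; apply/cvgrPdist_lt => e e0.
have c1 : 0 < `|c| + 1 by rewrite ltr_pwDr.
near=> t; rewrite -linB //; apply: (le_lt_trans (hb _)).
apply: (le_lt_trans (y := (`|c| + 1) * `|x - t|)).
  by apply: ler_wpM2r => //; apply: (le_trans (ler_norm c)); rewrite lerDl.
rewrite -ltr_pdivlMl //.
near: t; apply: cvgr_dist_lt => //; last by rewrite mulrC divr_gt0.
Unshelve. all: by end_near. Qed.

Lemma cont_bound {f} : is_dual f -> exists M, 0 < M /\ forall x, `|f x| <= M * `|x|.
Proof.
move=> [hl hc].
have /(_ _ 1 ltr01) := cvgr_dist_lt _ _ (hc 0); rewrite lin0 // => /nbhs_norm0P [d d0 hd].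
exists (2 / d); split; first by rewrite divr_gt0.
move=> x; have [->|x0] := eqVneq x 0; first by rewrite lin0 // !normr0 mulr0.
have nx : 0 < `|x| by rewrite normr_gt0.
set s := d / (2 * `|x|).
have s0 : 0 < s by rewrite divr_gt0 // mulr_gt0.
have := hd (s *: x); rewrite /= normrZ gtr0_norm // sub0r normrN linZ // normrM gtr0_norm //.
have -> : s * `|x| = d / 2 by rewrite /s; field; rewrite gt_eqF.
move=> /(_ _) H; have {}H := H _.
have := H ltac:(by rewrite ltr_pdivrMr // ltr_pMr // ltr1n).
rewrite -ltr_pdivlMl // => H2; apply: ltW; apply: (lt_le_trans H2).
rewrite /s mulr1 invf_div; rewrite le_eqVlt; apply/orP; left; apply/eqP; field; by rewrite gt_eqF.
Qed.


Lemma dnorm_ub f M : (forall x, `|f x| <= M * `|x|) ->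
  forall x, `|x| <= 1 -> `|f x| <= dnorm f.
Proof.
move=> hb x x1; apply: sup_upper_bound; last by exists x.
split; first by exists `|f x|; exists x.
exists `|M| => _ [z z1 <-]; apply: (le_trans (hb z)).
apply: (le_trans (y := `|M| * `|z|)); first by apply: ler_wpM2r => //; exact: ler_norm.
by rewrite -{2}(mulr1 `|M|); apply: ler_wpM2l.
Qed.

Lemma dnorm_le f c : 0 <= c -> (forall x, `|f x| <= c * `|x|) -> dnorm f <= c.
Proof.
move=> c0 hb; apply: ge_sup; first by exists `|f 0|; exists 0 => //; rewrite /= normr0.
move=> _ [z z1 <-]; apply: (le_trans (hb z)).
by rewrite -{2}(mulr1 c); apply: ler_wpM2l.
Qed.

Lemma dnorm_ge0 f M : (forall x, `|f x| <= M * `|x|) -> 0 <= dnorm f.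
Proof. move=> hb; apply: le_trans (@dnorm_ub f M hb 0 _) => //=; by rewrite normr0. Qed.

Lemma dual_bound {f} : is_dual f -> forall x, `|f x| <= dnorm f * `|x|.
Proof.
move=> hd; have hl := dual_lin hd; have [M [M0 hb]] := cont_bound hd.
move=> x; have [->|x0] := eqVneq x 0; first by rewrite lin0 // !normr0 mulr0.
have nx : 0 < `|x| by rewrite normr_gt0.
have := @dnorm_ub f M hb (`|x|^-1 *: x).
rewrite normrZ normfV normr_id mulVf ?gt_eqF // lexx linZ // normrM normfV normr_id.
by move=> /(_ isT); rewrite ler_pdivrMl // mulrC.
Qed.

Lemma dual_ball_bound {f} : dual_ball f -> forall x, `|f x| <= `|x|.
Proof.
move=> [hd h1] x; apply: (le_trans (dual_bound hd x)).
have := normr_ge0 x; nra.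
Qed.

End Basics.


Section HBan.
Context {R : realType} {V : normedModType R}.
Variable c : R.
Hypothesis c0 : 0 <= c.

Definition good (G : set (V * R)) :=
  [/\ G (0, 0),
    (forall a v1 r1 v2 r2, G (v1, r1) -> G (v2, r2) -> G (a *: v1 + v2, a * r1 + r2)) &
    (forall v r, G (v, r) -> r <= c * `|v|)].

Lemma good_uniq {G v r1 r2} : good G -> G (v, r1) -> G (v, r2) -> r1 = r2.
Proof.
move=> [G0 Gl Gb] h1 h2.
have := Gb _ _ (Gl (-1) _ _ _ _ h1 h2); rewrite scaleN1r addNr normr0 mulr0.
have := Gb _ _ (Gl (-1) _ _ _ _ h2 h1); rewrite scaleN1r addNr normr0 mulr0.
lra.
Qed.

Lemma good_scale {G v r} a : good G -> G (v, r) -> G (a *: v, a * r).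
Proof.
move=> [G0 Gl Gb] h; have := Gl a _ _ _ _ h G0; by rewrite addr0 addr0.
Qed.

Lemma good_abs {G v r} : good G -> G (v, r) -> `|r| <= c * `|v|.
Proof.
move=> gG h; have [_ _ Gb] := gG.
have := Gb _ _ (good_scale (-1) gG h); rewrite scaleN1r normrN mulN1r.
have := Gb _ _ h; rewrite ler_norml; lra.
Qed.

Definition gext (G : set (V * R)) (v : V) (a : R) : set (V * R) :=
  [set p | exists g r t, G (g, r) /\ p = (g + t *: v, r + t * a)].

Lemma vec_id (a t1 t2 : R) (g1 g2 v : V) :
  a *: (g1 + t1 *: v) + (g2 + t2 *: v) = (a *: g1 + g2) + (a * t1 + t2) *: v.
Proof.
rewrite scalerDr scalerA scalerDl -!addrA; congr (_ + _).
by rewrite addrCA.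
Qed.

Lemma scale_id (t : R) (g v : V) : t != 0 -> t *: (t^-1 *: g + v) = g + t *: v.
Proof. by move=> t0; rewrite scalerDr scalerA mulfV // scale1r. Qed.

Lemma gext_good G v : good G -> ~ (exists r, G (v, r)) ->
  exists a, good (gext G v a).
Proof.
move=> gG nv; have [G0 Gl Gb] := gG.
pose S := [set x | exists g r, G (g, r) /\ x = r - c * `|g - v|].
have key g1 r1 g2 r2 : G (g1, r1) -> G (g2, r2) -> r1 - c * `|g1 - v| <= c * `|g2 + v| - r2.
  move=> h1 h2; have := Gb _ _ (Gl 1 _ _ _ _ h1 h2); rewrite scale1r mul1r.
  have : `|g1 + g2| <= `|g1 - v| + `|g2 + v|.
    by rewrite (_ : g1 + g2 = (g1 - v) + (g2 + v)) ?ler_normD // addrACA addNr addr0.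
  move=> tri h; apply: (le_trans (y := c * `|g1 + g2| - r2 - c * `|g1 - v| + r1 - r1 + r2 - r2)); first by lra.
  have := ler_wpM2l c0 tri; lra.
have hS : has_sup S.
  split; first by exists (0 - c * `|0 - v|); exists 0, 0.
  exists (c * `|0 + v| - 0) => _ [g [r [h ->]]]; exact: key.
pose a := sup S.
have hA g r : G (g, r) -> r - c * `|g - v| <= a.
  by move=> h; apply: sup_upper_bound => //; exists g, r.
have hB g r : G (g, r) -> a <= c * `|g + v| - r.
  move=> h; apply: ge_sup; first by case: hS.
  by move=> _ [g' [r' [h' ->]]]; exact: key.
exists a; split.
- by exists 0, 0, 0; split => //; rewrite scale0r addr0 mul0r addr0.
- move=> b v1 r1 v2 r2 [g1 [s1 [t1 [h1 [-> ->]]]]] [g2 [s2 [t2 [h2 [-> ->]]]]].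
  exists (b *: g1 + g2), (b * s1 + s2), (b * t1 + t2); split; first exact: Gl.
  by rewrite vec_id; congr (_, _); ring.
- move=> w s [g [r [t [h [-> ->]]]]].
  have [t0|t0|->] := ltgtP t 0; last by rewrite scale0r addr0 mul0r addr0; exact: Gb.
  + pose u := - t; have u0 : 0 < u by rewrite /u oppr_gt0.
    have := hA _ _ (good_scale (u^-1) gG h).
    have e : g + t *: v = u *: (u^-1 *: g - v).
      by rewrite scalerDr scalerA mulfV ?gt_eqF // scale1r scalerN /u scaleNr opprK.
    rewrite e normrZ gtr0_norm // => H.
    have := ler_wpM2l (ltW u0) H.
    rewrite mulrBr mulrA mulfV ?gt_eqF // mul1r /u; lra.
  + have := hB _ _ (good_scale (t^-1) gG h).
    rewrite -(@scale_id t g v (lt0r_neq0 t0)) normrZ gtr0_norm // => H.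
    have := ler_wpM2l (ltW t0) H.
    rewrite mulrBr (mulrA t t^-1) mulfV ?lt0r_neq0 // mul1r mulrCA; lra.
Qed.


Lemma HBext G0 : good G0 -> exists f : V -> R, is_dual f /\
  (forall v r, G0 (v, r) -> f v = r) /\ (forall x, `|f x| <= c * `|x|).
Proof.
move=> g0.
pose P := [set A : set (V * R) | good (A `|` G0)].
have [A [PA Amax]] : exists A, P A /\ forall B, A `<` B -> ~ P B.
  apply: Zorn_bigcup => F FP Ftot.
  set U := \bigcup_(X in F) X `|` G0.
  have two p1 p2 : U p1 -> U p2 -> exists H, [/\ good H, H p1, H p2 & H `<=` U].
    have sub X : F X -> X `|` G0 `<=` U.
      by move=> FX p [Xp|Gp]; [left; exists X|right].
    move=> [[X1 FX1 h1]|h1] [[X2 FX2 h2]|h2].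
    - have [s12|s21] := Ftot _ _ FX1 FX2.
      + by exists (X2 `|` G0); split; [exact: FP|left; exact: s12|left|exact: sub].
      + by exists (X1 `|` G0); split; [exact: FP|left|left; exact: s21|exact: sub].
    - by exists (X1 `|` G0); split; [exact: FP|left|right|exact: sub].
    - by exists (X2 `|` G0); split; [exact: FP|right|left|exact: sub].
    - by exists G0; split => // p Gp; right.
  split; first by right; case: g0.
  - move=> a v1 r1 v2 r2 h1 h2; have [H [[_ Hl _] H1 H2 HU]] := two _ _ h1 h2.
    exact/HU/Hl.
  - move=> v r h; have [H [[_ _ Hb] H1 _ _]] := two _ _ h h; exact: Hb.
set G := A `|` G0.
have tot v : exists r, G (v, r).
  have [//|nv'] := pselect (exists r, G (v, r)); exfalso.
  have [a ga] := @gext_good G v PA nv'.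
  apply: (Amax (gext G v a)); last first.
    rewrite /P /=; suff -> : gext G v a `|` G0 = gext G v a by [].
    apply/seteqP; split=> p; last by left.
    case: p => w r; case=> // Gp; exists w, r, 0; split; first by right.
    by rewrite scale0r addr0 mul0r addr0.
  split.
    move=> [w r] Ap; exists w, r, 0; split; first by left.
    by rewrite scale0r addr0 mul0r addr0.
  move=> /(_ (v, a)) h; apply: nv'; exists a; left; apply: h.
  by exists 0, 0, 1; split; [right; case: g0|rewrite scale1r add0r mul1r add0r].
pose f v := xget 0 (fun r => G (v, r)).
have fG v : G (v, f v) by exact: (xgetPex 0 (tot v)).
have fE v r : G (v, r) -> f v = r by move=> h; exact: good_uniq PA (fG v) h.
have fl : islin f.
  move=> a x y; apply: fE; have [_ Gl _] := PA; exact: Gl (fG x) (fG y).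
have fb x : `|f x| <= c * `|x| by exact: good_abs PA (fG x).
exists f; split; first by split => //; exact: bound_cont fb.
split => // v r h; apply: fE; by right.
Qed.

End HBan.

Section Norming.
Context {R : realType} {V : normedModType R}.

Lemma norming (x : V) : exists f : V -> R, dual_ball f /\ f x = `|x|.
Proof.
pose G0 := [set p : V * R | exists t : R, p = (t *: x, t * `|x|)].
have g0 : good 1 G0.
  split.
  - by exists 0; rewrite scale0r mul0r.
  - move=> a v1 r1 v2 r2 [t1 [-> ->]] [t2 [-> ->]]; exists (a * t1 + t2).
    by rewrite scalerDl scalerA mulrDl mulrA.
  - move=> v r [t [-> ->]]; rewrite mul1r normrZ; apply: ler_wpM2r => //.
    exact: ler_norm.
have [f [fd [fG fb]]] := @HBext _ _ 1 ler01 G0 g0.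
exists f; split; last first.
  have := fG (1 *: x) (1 * `|x|); rewrite scale1r mul1r; apply.
  by exists 1; rewrite scale1r mul1r.
by split => //; apply: dnorm_le => //; exact: ler01.
Qed.

End Norming.


Section Impl.
Context {R : realType} {V : normedModType R}.

Lemma span0 {m} (e : 'I_m -> V) : span_of e 0.
Proof. by exists (fun=> 0); rewrite big1 // => i _; rewrite scale0r. Qed.

Lemma spanZD {m} {e : 'I_m -> V} a x y : span_of e x -> span_of e y ->
  span_of e (a *: x + y).
Proof.
move=> [cx ->] [cy ->]; exists (fun j => a * cx j + cy j).
rewrite scaler_sumr -big_split /=; apply: eq_bigr => j _.
by rewrite scalerDl scalerA.
Qed.

Lemma spanZ {m} {e : 'I_m -> V} a x : span_of e x -> span_of e (a *: x).
Proof. by move=> h; rewrite -(addr0 (a *: x)); apply: spanZD => //; exact: span0. Qed.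

Lemma span_e {m} (e : 'I_m -> V) i : span_of e (e i).
Proof.
exists (fun j => (j == i)%:R); rewrite (bigD1 i) //= eqxx scale1r big1 ?addr0 //.
by move=> j /negbTE ->; rewrite scale0r.
Qed.

Lemma oct_scaled m (e : 'I_m -> V) (y : V) (d : R) : 0 <= d <= 1 -> `|y| = 1 ->
  (forall x, span_of e x -> `|x + y| >= (1 - d) * (`|x| + `|y|)) ->
  forall x t, span_of e x -> `|x + t *: y| >= (1 - d) * (`|x| + `|t|).
Proof.
move=> /andP[d0 d1] y1 H x t sx.
have [->|t0] := eqVneq t 0.
  rewrite scale0r addr0 normr0 addr0; have := normr_ge0 x; nra.
have := H _ (spanZ t^-1 x sx); rewrite y1 => H1.
have -> : x + t *: y = t *: (t^-1 *: x + y) by rewrite scale_id.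
rewrite normrZ normrZ normfV in H1 *.
have nt : 0 < `|t| by rewrite normr_gt0.
have := ler_wpM2l (ltW nt) H1.
have -> : `|t| * ((1 - d) * (`|t|^-1 * `|x| + 1)) = (1 - d) * (`|x| + `|t|).
  by field; rewrite gt_eqF.
by [].
Qed.

Lemma ii_iii : @octahedral R V -> @prop_iii R V.
Proof.
move=> oct m e n xs eps eps0 hxs he he0 hlt.
pose d := (eps - eps0) / (1 + eps).
have e1 : 0 < 1 + eps by lra.
have hd : (1 - d) * (1 + eps) = 1 + eps0 by rewrite /d; field; rewrite gt_eqF.
have d0 : 0 < d by rewrite /d divr_gt0 //; lra.
have d1 : d <= 1 by rewrite /d ler_pdivrMr //; lra.
have [y [y1 Hy]] := oct m e d d0.
have Hs := @oct_scaled m e y d ltac:(by rewrite (ltW d0) d1) y1 Hy.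
exists y; split => // gamma hg.
suff: forall i, exists f : V -> R, is_dual f /\ (forall z, span_of e z -> f z = xs i z) /\
    f y = gamma i /\ dnorm f <= 1 + eps.
  by move=> /choice [ys hys]; exists ys.
move=> i.
pose G0 := [set p : V * R | exists x t, span_of e x /\ p = (x + t *: y, xs i x + t * gamma i)].
have hl := dual_lin (proj1 (hxs i)).
have g0 : good (1 + eps) G0.
  split.
  - by exists 0, 0; split; [exact: span0|rewrite scale0r addr0 mul0r addr0 lin0].
  - move=> a v1 r1 v2 r2 [x1 [t1 [s1 [-> ->]]]] [x2 [t2 [s2 [-> ->]]]].
    exists (a *: x1 + x2), (a * t1 + t2); split; first exact: spanZD.
    rewrite vec_id hl; congr (_, _); ring.
  - move=> v r [x [t [sx [-> ->]]]].
    have h1 := dual_ball_bound (hxs i) x.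
    have h2 : t * gamma i <= `|t| * (1 + eps0).
      apply: (le_trans (ler_norm _)); rewrite normrM; apply: ler_wpM2l => //.
    have h3 := Hs x t sx.
    have nx := normr_ge0 x; have nt := normr_ge0 t.
    have h4 := ler_norm (xs i x).
    have h5 : (1 + eps) * ((1 - d) * (`|x| + `|t|)) <= (1 + eps) * `|x + t *: y|.
      by apply: ler_wpM2l => //; lra.
    rewrite mulrA [(1 + eps) * _]mulrC hd in h5.
    nra.
have [f [fd [fG fb]]] := @HBext _ _ (1 + eps) (ltW e1) G0 g0.
exists f; split => //; split.
  move=> z sz; apply: fG; exists z, 0; split => //.
  by rewrite scale0r addr0 mul0r addr0.
split; last by apply: dnorm_le => //; exact: ltW.
have := fG (0 + 1 *: y) (xs i 0 + 1 * gamma i).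
rewrite add0r scale1r lin0 // add0r mul1r; apply.
exists 0, 1; split; first exact: span0.
by rewrite add0r scale1r lin0 // add0r mul1r.
Qed.

Lemma iii_iii' : @prop_iii R V -> @prop_iii' R V.
Proof.
move=> h3 m e n xs eps hxs he.
have [y [y1 H]] := h3 m e n xs eps (eps / 2) hxs he ltac:(by rewrite divr_gt0) ltac:(lra).
have [ys1 hy1] := H (fun=> 1 + eps / 2) ltac:(by move=> i; rewrite ger0_norm //; lra).
have [ys2 hy2] := H (fun=> - (1 + eps / 2)) ltac:(by move=> i; rewrite normrN ger0_norm //; lra).
exists y, ys1, ys2; split => // i.
have [d1 [a1 [v1 n1]]] := hy1 i; have [d2 [a2 [v2 n2]]] := hy2 i.
do 2 (split => //); split; first by move=> z sz; split; [exact: a1|exact: a2].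
by rewrite v1 v2; split => //; lra.
Qed.


Lemma conv_ball {n} {lam : 'I_n -> R} {S : 'I_n -> set (V -> R)} {h} :
  (forall i, 0 <= lam i) -> \sum_(i < n) lam i = 1 ->
  (forall i f, S i f -> dual_ball f) -> conv_comb lam S h ->
  forall v, `|h v| <= `|v|.
Proof.
move=> hl hs hS [f [hf ->]] v.
apply: (le_trans (ler_norm_sum _ _ _)).
apply: (le_trans (y := \sum_(i < n) lam i * `|v|)).
  apply: ler_sum => i _; rewrite normrM ger0_norm //; apply: ler_wpM2l => //.
  exact: dual_ball_bound (hS _ _ (hf i)) v.
by rewrite -mulr_suml hs mul1r.
Qed.

Lemma scale_ball (g : V -> R) (eps : R) : 0 < eps -> is_dual g -> dnorm g <= 1 + eps ->
  dual_ball (fun v => (1 + eps)^-1 * g v).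
Proof.
move=> he gd gn.
have gl := dual_lin gd.
have e1 : 0 < 1 + eps by lra.
have hb v : `|(1 + eps)^-1 * g v| <= 1 * `|v|.
  rewrite normrM gtr0_norm ?invr_gt0 // mul1r ler_pdivrMl //.
  apply: (le_trans (dual_bound gd v)); apply: ler_wpM2r => //.
have hl : islin (fun v => (1 + eps)^-1 * g v).
  by move=> a x y; rewrite gl; ring.
split; first by split => //; exact: bound_cont hb.
exact: dnorm_le ler01 hb.
Qed.

Lemma iii'_i : @prop_iii' R V -> @wstar_SD2P R V.
Proof.
move=> h3 n lam x al hl hs hx ha.
set S := conv_comb _ _.
rewrite /ddiam; set D := (X in sup X).
have hSb : forall i f, (fun i => wstar_slice (x i) (al i)) i f -> dual_ball f.
  by move=> i f [].
have bnd f g : S f -> S g -> forall v, `|f v - g v| <= 2 * `|v|.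
  move=> Sf Sg v; apply: (le_trans (ler_normB _ _)).
  have := conv_ball hl hs hSb Sf v; have := conv_ball hl hs hSb Sg v; lra.
have ub d : D d -> d <= 2.
  move=> [f [g [Sf [Sg ->]]]]; apply: dnorm_le => //; exact: bnd.
have elem eps : 0 < eps -> (forall i, eps <= al i) ->
    exists d, D d /\ (2 - eps) / (1 + eps) <= d.
  move=> he hal.
  have [f hf] := choice (fun i => @norming R V (x i)).
  have [y [x1 [x2 [y1 H]]]] := h3 n x n f eps (fun i => (hf i).1) he.
  have e1 : 0 < 1 + eps by lra.
  have inv1 : (1 + eps)^-1 * (1 + eps) = 1 by rewrite mulVf // gt_eqF.
  have inv0 : 0 < (1 + eps)^-1 by rewrite invr_gt0.
  have key : 1 - eps < (1 + eps)^-1 by nra.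
  pose g1 i := fun v => (1 + eps)^-1 * x1 i v.
  pose g2 i := fun v => (1 + eps)^-1 * x2 i v.
  have sl (g : 'I_n -> V -> R) i : is_dual (g i) -> (forall z, span_of x z -> g i z = f i z) ->
      dnorm (g i) <= 1 + eps -> wstar_slice (x i) (al i) (fun v => (1 + eps)^-1 * g i v).
    move=> gd ga gn; split; first exact: scale_ball.
    rewrite /= ga; last exact: span_e.
    rewrite (hf i).2 hx mulr1; have := hal i; lra.
  have Sg1 : S (fun v => \sum_(i < n) lam i * g1 i v).
    exists g1; split => // i; have [d1 [d2 [a [_ [n1 _]]]]] := H i.
    by apply: sl => // z sz; case: (a z sz).
  have Sg2 : S (fun v => \sum_(i < n) lam i * g2 i v).
    exists g2; split => // i; have [d1 [d2 [a [_ [_ n2]]]]] := H i.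
    by apply: sl => // z sz; case: (a z sz).
  eexists; split; first by exists (fun v => \sum_(i < n) lam i * g1 i v), (fun v => \sum_(i < n) lam i * g2 i v).
  apply: (le_trans _ (@dnorm_ub _ _ _ 2 (bnd _ _ Sg1 Sg2) y _)); last by rewrite y1.
  apply: (le_trans _ (ler_norm _)); rewrite -sumrB.
  apply: (le_trans (y := \sum_(i < n) lam i * ((2 - eps) / (1 + eps)))).
    by rewrite -mulr_suml hs mul1r.
  apply: ler_sum => i _; rewrite /g1 /g2 -mulrBr; apply: ler_wpM2l => //.
  rewrite -mulrBr [X in _ <= X]mulrC; apply: ler_wpM2r; first exact: ltW.
  by have [_ [_ [_ [/ltW ? _]]]] := H i.
pose kappa := (1 + \sum_(i < n) (al i)^-1)^-1.
have sum0 : 0 <= \sum_(i < n) (al i)^-1.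
  by apply: sumr_ge0 => i _; rewrite invr_ge0 ltW.
have k0 : 0 < kappa by rewrite invr_gt0; lra.
have kal i : kappa <= al i.
  rewrite -[al i]invrK lef_pV2 ?posrE ?invr_gt0 //; last by lra.
  rewrite (bigD1 i) //=; have : 0 <= \sum_(j < n | j != i) (al j)^-1.
    by apply: sumr_ge0 => j _; rewrite invr_ge0 ltW.
  lra.
have k1 : kappa <= 1.
  by rewrite invf_le1; lra.
have [d0 [Dd0 _]] := elem kappa k0 kal.
have hsup : has_sup D by split; [exists d0|exists 2 => d; exact: ub].
apply/le_anti/andP; split; first by apply: ge_sup; [exists d0|exact: ub].
rewrite leNgt; apply/negP => hlt.
pose eps := Order.min kappa ((2 - sup D) / 4).
have eps0 : 0 < eps by rewrite lt_min k0 divr_gt0 //; lra.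
have : eps <= kappa /\ eps <= (2 - sup D) / 4.
  by apply/andP; rewrite -le_min.
move=> [ek ed].
have [d [Dd hd]] := elem eps eps0 (fun i => le_trans ek (kal i)).
have := sup_upper_bound hsup Dd.
have : 2 - 3 * eps <= (2 - eps) / (1 + eps).
  rewrite ler_pdivlMr; last by lra.
  nra.
move=> h1 h2; lra.
Qed.

End Impl.


Section Net.
Context {R : realType} {V : normedModType R}.

Lemma le_of_eq (x y : R) : x = y -> x <= y.
Proof. by move=> ->. Qed.

Lemma grid (T h : R) : 0 < h -> exists G : seq R,
  forall t, `|t| <= T -> exists2 s, s \in G & `|t - s| <= h.
Proof.
move=> h0; pose N := Num.truncn (2 * T / h).
exists [seq - T + k%:R * h | k <- iota 0 N.+1] => t tT.
pose q := (t + T) / h.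
have q0 : 0 <= q by rewrite /q divr_ge0 //; [have := ler_norml t T; rewrite tT; lra| exact: ltW].
have := truncn_itv q0; set k := Num.truncn q => /andP[kq qk].
exists (- T + k%:R * h).
  apply/mapP; exists k => //; rewrite mem_iota add0n /= ltnS.
  rewrite /k truncn_le_nat; apply: (le_lt_trans _ (truncnS_gt _)).
  rewrite /q ler_pM2r ?invr_gt0 //; have := ler_norml t T; rewrite tT; lra.
have e : t - (- T + k%:R * h) = h * (q - k%:R).
  by rewrite /q; field; rewrite gt_eqF.
rewrite e normrM gtr0_norm // ger0_norm; last by lra.
rewrite -[X in _ <= X]mulr1; apply: ler_wpM2l; [exact: ltW|lra].
Qed.

Lemma span_split {m} {e : 'I_m.+1 -> V} {x} : span_of e x ->
  exists x' t, span_of (fun j : 'I_m => e (widen_ord (leqnSn m) j)) x' /\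
    x = x' + t *: e ord_max.
Proof.
move=> [c ->]; rewrite big_ord_recr /=.
by exists (\sum_(i < m) c (widen_ord (leqnSn m) i) *: e (widen_ord (leqnSn m) i)), (c ord_max); split => //; eexists.
Qed.

Lemma net m (e : 'I_m -> V) : forall r dl : R, 0 < dl -> exists L : seq V,
  forall x, span_of e x -> `|x| <= r -> exists2 z, z \in L & `|x - z| <= dl.
Proof.
elim: m e => [|m IH] e r dl dl0.
  exists [:: 0] => x [c ->] _; exists 0; first by rewrite inE.
  by rewrite big_ord0 subr0 normr0 ltW.
set e' := fun j : 'I_m => e (widen_ord (leqnSn m) j).
set v := e ord_max.
have [[k [k0 hk]]|nk] := pselect (exists k : R, 0 < k /\
    forall x' t, span_of e' x' -> k * `|t| <= `|x' + t *: v|).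
- pose T := r / k.
  have [L' hL'] := IH e' (r + T * `|v|) (dl / 2) ltac:(by rewrite divr_gt0).
  have [G hG] := @grid T (dl / (2 * (`|v| + 1))) ltac:(by rewrite divr_gt0 // mulr_gt0 //; rewrite ltr_pwDr).
  exists [seq z + s *: v | z <- L', s <- G] => x sx xr.
  have [x' [t [sx' ex]]] := span_split sx; subst x.
  have tT : `|t| <= T.
    rewrite /T ler_pdivlMr // mulrC; exact: le_trans (hk _ t sx') xr.
  have [s sG ts] := hG t tT.
  have x'r : `|x'| <= r + T * `|v|.
    have : `|x'| <= `|x' + t *: v| + `|t *: v|.
      by rewrite -[X in `|X| <= _](addrK (t *: v)); apply: ler_normB.
    rewrite normrZ; have := ler_wpM2r (normr_ge0 v) tT; lra.
  have [z zL zx] := hL' x' sx' x'r.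
  exists (z + s *: v); first exact: allpairs_f.
  have -> : x' + t *: v - (z + s *: v) = (x' - z) + (t - s) *: v.
    by rewrite scalerBl opprD !addrA; congr (_ + _); rewrite addrAC.
  apply: (le_trans (ler_normD _ _)); rewrite normrZ.
  have : `|t - s| * `|v| <= dl / 2.
    have v1 : 0 < `|v| + 1 by rewrite ltr_pwDr.
    apply: (le_trans (ler_wpM2r (normr_ge0 v) ts)).
    have -> : dl / (2 * (`|v| + 1)) * `|v| = dl / 2 * (`|v| / (`|v| + 1)).
      by field; rewrite gt_eqF.
    rewrite -[X in _ <= X]mulr1; apply: ler_wpM2l; first by rewrite divr_ge0 // ltW.
    rewrite ler_pdivrMr // mul1r; lra.
  lra.
- have [L' hL'] := IH e' (r + dl / 2) (dl / 2) ltac:(by rewrite divr_gt0).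
  exists L' => x sx xr.
  have [x' [t [sx' ex]]] := span_split sx; subst x.
  have [w [sw [wx wr]]] : exists w, [/\ span_of e' w, `|x' + t *: v - w| <= dl / 2 & `|w| <= r + dl / 2].
    have [et|t0] := eqVneq t 0.
      subst t; rewrite scale0r addr0 in xr *.
      have : 0 <= dl / 2 by rewrite divr_ge0 // ltW.
      exists x'; split => //; first by rewrite subrr normr0.
      lra.
    have nt : 0 < `|t| by rewrite normr_gt0.
    have : ~ (forall x'' s, span_of e' x'' -> (dl / (2 * `|t|)) * `|s| <= `|x'' + s *: v|).
      by move=> H; apply: nk; exists (dl / (2 * `|t|)); split => //; rewrite divr_gt0 // mulr_gt0.
    move=> /existsNP [x'' /existsNP [s /not_implyP [sx'' /negP]]]; rewrite -ltNge => hs.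
    have s0 : s != 0.
      apply/negP => /eqP s0; move: hs; rewrite s0 normr0 mulr0 scale0r addr0.
      by rewrite ltNge normr_ge0.
    have ns : 0 < `|s| by rewrite normr_gt0.
    exists (x' - (t / s) *: x''); split.
    - by rewrite -scaleN1r -[X in span_of _ X]addrC; apply: spanZD; rewrite ?scaleN1r //; apply: spanZ.
    - have -> : x' + t *: v - (x' - (t / s) *: x'') = (t / s) *: (x'' + s *: v).
        by rewrite scalerDr scalerA mulfVK // opprB addrC addrA subrK addrC.
      rewrite normrZ normrM normfV.
      have := ler_wpM2l (y := _) (ltW (divr_gt0 nt ns)) (ltW hs).
      move=> H; apply: (le_trans H); apply: le_of_eq; field.
      by rewrite !gt_eqF.
    - set w := x' - _.
      have hw : `|x' + t *: v - w| <= dl / 2.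
        have -> : x' + t *: v - w = (t / s) *: (x'' + s *: v).
          by rewrite /w scalerDr scalerA mulfVK // opprB addrC addrA subrK addrC.
        rewrite normrZ normrM normfV.
        have := ler_wpM2l (y := _) (ltW (divr_gt0 nt ns)) (ltW hs).
        move=> H; apply: (le_trans H); apply: le_of_eq; field.
        by rewrite !gt_eqF.
      have : `|w| <= `|x' + t *: v| + `|x' + t *: v - w|.
        have ew : (x' + t *: v) - (x' + t *: v - w) = w by rewrite opprB addrC subrK.
        by have := ler_normB (x' + t *: v) (x' + t *: v - w); rewrite ew.
      lra.
  have [z zL zw] := hL' w sw wr.
  exists z => //.
  have -> : x' + t *: v - z = (x' + t *: v - w) + (w - z) by rewrite addrA subrK.
  apply: (le_trans (ler_normD _ _)); lra.
Qed.

End Net.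


Section IToII.
Context {R : realType} {V : normedModType R}.

Lemma eq_le_trans' (a : R) : a = 1 -> a <= 1.
Proof. by move=> ->. Qed.

Lemma rev_tri (p q : V) : `|p| - `|q| <= `|p + q|.
Proof. by have := lerB_dist p (- q); rewrite normrN opprK. Qed.

Lemma oct_from_unit (x y : V) (c : R) : 0 <= c -> `|y| = 1 ->
  (x != 0 -> 2 - c <= `| `|x|^-1 *: x + y|) -> (1 - c) * (`|x| + `|y|) <= `|x + y|.
Proof.
move=> c0 y1 H; rewrite y1.
have [->|x0] := eqVneq x 0; first by rewrite normr0 !add0r y1; lra.
have := H x0; set u := `|x|^-1 *: x => hu.
set a := `|x|; have a0 : 0 < a by rewrite normr_gt0.
have nu : `|u| = 1 by rewrite normrZ normfV normr_id mulVf // gt_eqF.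
have ex : x = a *: u by rewrite /u scalerA mulfV ?gt_eqF // scale1r.
rewrite ex; have [a1|a1] := lerP a 1.
- have e : a *: u + y = (u + y) + (a - 1) *: u.
    by rewrite scalerBl scale1r addrCA addrAC subrr add0r.
  have := rev_tri (u + y) ((a - 1) *: u); rewrite -e normrZ nu mulr1 ler0_norm; last by lra.
  nra.
- have e : a *: u + y = a *: (u + y) + (1 - a) *: y.
    by rewrite scalerDr scalerBl scale1r -addrA [a *: y + _]addrCA subrr addr0.
  have := rev_tri (a *: (u + y)) ((1 - a) *: y); rewrite -e !normrZ y1 mulr1.
  rewrite gtr0_norm // ler0_norm; last by lra.
  have := ler_wpM2l (ltW a0) hu; nra.
Qed.

Lemma unit_net m (e : 'I_m -> V) (u : V) (dl : R) : `|u| = 1 -> 0 < dl -> dl < 1 ->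
  exists W : seq V, [/\ (0 < size W)%N, forall w, w \in W -> `|w| = 1 &
    forall x, span_of e x -> `|x| = 1 -> exists2 w, w \in W & `|x - w| <= 2 * dl].
Proof.
move=> u1 dl0 dl1.
have [L hL] := @net R V m e 1 dl dl0.
pose nz (z : V) := if z == 0 then u else `|z|^-1 *: z.
exists (u :: [seq nz z | z <- L]); split => //.
  move=> w; rewrite inE => /orP[/eqP ->//|/mapP [z _ ->]].
  rewrite /nz; case: eqP => // /eqP z0.
  by rewrite normrZ normfV normr_id mulVf // normr_eq0.
move=> x sx x1; have [z zL zx] := hL x sx (eq_le_trans' _ x1).
have hz : 1 - dl <= `|z|.
  by have := rev_tri x (- z); rewrite normrN x1; lra.
have z0 : z != 0 by rewrite -normr_eq0 gt_eqF //; lra.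
have nz0 : 0 < `|z| by rewrite normr_gt0.
exists (nz z); first by rewrite inE; apply/orP; right; apply: map_f.
rewrite /nz (negbTE z0).
apply: (le_trans (ler_distD z _ _)).
have : `|z - `|z|^-1 *: z| <= dl.
  have -> : z - `|z|^-1 *: z = (1 - `|z|^-1) *: z by rewrite scalerBl scale1r.
  rewrite normrZ.
  have -> : `|1 - `|z|^-1| * `|z| = `| `|z| - 1|.
    rewrite -[X in _ * X = _]normr_id -normrM mulrBl mul1r mulVf ?gt_eqF //.
  rewrite ler_norml; have := lerB_dist x z; have := lerB_dist z x.
  rewrite (distrC z x) x1; lra.
lra.
Qed.


Lemma i_ii : (exists u : V, u != 0) -> @wstar_SD2P R V -> @octahedral R V.
Proof.
move=> [u0 hu0] sd m e eps heps.
pose u := `|u0|^-1 *: u0.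
have u1 : `|u| = 1 by rewrite normrZ normfV normr_id mulVf // normr_eq0.
pose dl := Order.min (eps / 7) (1 / 8).
have dl0 : 0 < dl by rewrite lt_min !divr_gt0.
have : dl <= eps / 7 /\ dl <= 1 / 8 by apply/andP; rewrite -le_min.
move=> [dle dl8].
have [W [W0 Wu Wn]] := @unit_net m e u dl u1 dl0 ltac:(lra).
set N := size W.
have N0 : (0 < N%:R :> R) by rewrite ltr0n.
pose xs (i : 'I_N) := nth u W i.
have xsu i : `|xs i| = 1 by apply: Wu; apply: mem_nth.
pose lam (i : 'I_N) := (N%:R : R)^-1.
have hl i : 0 <= lam i by rewrite /lam invr_ge0 ltW.
have hs : \sum_(i < N) lam i = 1.
  by rewrite /lam sumr_const card_ord -[X in X = 1]mulr_natr mulVf // gt_eqF.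
have hD := sd N lam xs (fun=> dl) hl hs xsu (fun=> dl0).
rewrite /ddiam in hD; set D := (X in sup X) in hD.
set S := conv_comb _ _ in D hD.
have hSb : forall i f, (fun i => wstar_slice (xs i) dl) i f -> dual_ball f.
  by move=> i f [].
have bnd f g : S f -> S g -> forall v, `|f v - g v| <= 2 * `|v|.
  move=> Sf Sg v; apply: (le_trans (ler_normB _ _)).
  have := conv_ball hl hs hSb Sf v; have := conv_ball hl hs hSb Sg v; lra.
have [Dne|nD] := pselect (D !=set0); last first.
  exfalso; have : D = set0.
    by apply/seteqP; split => // z Dz; apply: nD; exists z.
  by move=> D0; move: hD; rewrite D0 sup0 => /eqP; rewrite eq_sym pnatr_eq0.
have hsD : has_sup D.
  split => //; exists 2 => _ [f [g [Sf [Sg ->]]]]; apply: dnorm_le => //; exact: bnd.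
have dN0 : 0 < dl / N%:R by rewrite divr_gt0.
have [_ [h [g [Sh [Sg ->]]]] hd] := sup_adherent dN0 hsD.
rewrite hD in hd.
pose Dn := [set `|(fun v => h v - g v) x| | x in [set x : V | `|x| <= 1]].
have hsDn : has_sup Dn.
  split; first by exists `|h 0 - g 0|; exists 0 => //=; rewrite normr0.
  exists 2 => _ [z /= z1 <-]; apply: (le_trans (bnd _ _ Sh Sg z)); lra.
have [_ [x0 x01 <-] hx0] := sup_adherent dN0 hsDn.
rewrite -/(dnorm _) in hx0.
have x1' : `|x0| <= 1 := x01.
have [a [b [ha hb hab]]] : exists a b : 'I_N -> V -> R,
    [/\ forall i, wstar_slice (xs i) dl (a i), forall i, wstar_slice (xs i) dl (b i) &
    2 - 2 * (dl / N%:R) < \sum_(i < N) lam i * (a i x0 - b i x0)].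
  move: Sh Sg => [fh [hfh eh]] [fg [hfg eg]].
  have eq1 : \sum_(i < N) lam i * (fh i x0 - fg i x0) = h x0 - g x0.
    by rewrite eh eg -sumrB; apply: eq_bigr => i _; rewrite mulrBr.
  have [pos|neg] := lerP 0 (h x0 - g x0).
  - exists fh, fg; split => //; rewrite eq1.
    move: hx0; rewrite /= ger0_norm //; lra.
  - exists fg, fh; split => //.
    have -> : \sum_(i < N) lam i * (fg i x0 - fh i x0) = - (h x0 - g x0).
      by rewrite -eq1 -sumrN; apply: eq_bigr => i _; rewrite -mulrN opprB.
    move: hx0; rewrite /= ltr0_norm //; lra.
have ab1 i : `|a i x0| <= 1 /\ `|b i x0| <= 1.
  split; apply: (le_trans (dual_ball_bound _ _) x01).
    by case: (ha i).
  by case: (hb i).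
have hk k : 2 - 2 * dl < a k x0 - b k x0.
  pose t i := a i x0 - b i x0.
  have ht i : t i <= 2 by have := ab1 i; rewrite /t => -[]; rewrite !ler_norml; lra.
  have sumt : 2 * N%:R - 2 * dl < \sum_(i < N) t i.
    move: hab; rewrite /lam -mulr_sumr -/(t _).
    have -> : \sum_(i < N) (a i x0 - b i x0) = \sum_(i < N) t i by [].
    move=> H; move: H; rewrite -(ltr_pM2l N0).
    have -> : N%:R * (N%:R^-1 * \sum_(i < N) t i) = \sum_(i < N) t i.
      by rewrite mulrA mulfV ?gt_eqF // mul1r.
    have -> : N%:R * (2 - 2 * (dl / N%:R)) = 2 * N%:R - 2 * dl.
      by field; rewrite gt_eqF.
    done.
  have : 2 - t k <= \sum_(i < N) (2 - t i).
    rewrite (bigD1 k) //= lerDl; apply: sumr_ge0 => i _; rewrite subr_ge0; exact: ht.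
  rewrite sumrB sumr_const card_ord -[(2:R) *+ N]mulr_natr => H; move: sumt H; rewrite /t; lra.
have hxs k : 1 - dl < a k (xs k) by case: (ha k) => _ /=.
have nx0 : 1 - 2 * dl < `|x0|.
  pose k0 := Ordinal W0.
  have H := hk k0; have [A B] := ab1 k0; rewrite !ler_norml in A B.
  have : a k0 x0 <= `|x0|.
    by apply: le_trans (ler_norm _) _; apply: dual_ball_bound; case: (ha k0).
  lra.
have x0p : 0 < `|x0| by lra.
pose y := `|x0|^-1 *: x0.
have y1 : `|y| = 1 by rewrite normrZ normfV normr_id mulVf // gt_eqF.
have yx0 : `|y - x0| <= 2 * dl.
  have -> : y - x0 = (`|x0|^-1 - 1) *: x0 by rewrite scalerBl scale1r.
  rewrite normrZ.
  have -> : `| `|x0|^-1 - 1| * `|x0| = `|1 - `|x0| |.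
    rewrite -[X in _ * X = _]normr_id -normrM mulrBl mul1r mulVf ?gt_eqF //.
  rewrite ger0_norm; lra.
exists y; split => //.
move=> x sx.
apply: (@le_trans _ _ ((1 - 7 * dl) * (`|x| + `|y|))).
  apply: ler_wpM2r; first by rewrite addr_ge0.
  lra.
apply: oct_from_unit => //; first by lra.
move=> xn0.
have sxn : span_of e (`|x|^-1 *: x) by apply: spanZ.
have [w wW wx] := Wn _ sxn ltac:(by rewrite normrZ normfV normr_id mulVf // normr_eq0).
have kl : (index w W < N)%N by rewrite index_mem.
pose k := Ordinal kl.
have xk : xs k = w by rewrite /xs /= nth_index.
have [A B] := ab1 k; rewrite !ler_norml in A B.
have H := hk k; have H2 := hxs k; rewrite xk in H2.
have la := dual_lin (ha k).1.1.
have n1 : a k (w + x0) <= `|w + x0|.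
  exact: le_trans (ler_norm _) (dual_ball_bound (ha k).1 _).
rewrite linD // in n1.
have n2 := lerB_dist (w + x0) (w + y).
have e2 : w + x0 - (w + y) = - (y - x0).
  by rewrite (addrC w x0) addrKA opprB.
rewrite e2 normrN in n2.
have n3 := lerB_dist (w + y) (`|x|^-1 *: x + y).
have e3 : w + y - (`|x|^-1 *: x + y) = - (`|x|^-1 *: x - w).
  by rewrite (addrC (`|x|^-1 *: x) y) addrKA opprB.
rewrite e3 normrN in n3.
lra.
Qed.

End IToII.

Theorem theorem3p5 (R : realType) (V : completeNormedModType R)
  (hnontriv : exists x : V, x != 0) :
  (@wstar_SD2P R V <-> @octahedral R V) /\
  (@octahedral R V <-> @prop_iii R V) /\
  (@prop_iii R V <-> @prop_iii' R V).
Proof.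
have ii_i : @octahedral R V -> @wstar_SD2P R V.
  by move=> oct; apply: iii'_i; apply: iii_iii'; apply: ii_iii.
have i_ii' : @wstar_SD2P R V -> @octahedral R V := i_ii hnontriv.
split; first by split.
split; split.
- exact: ii_iii.
- by move=> h; apply: i_ii'; apply: iii'_i; apply: iii_iii'.
- exact: iii_iii'.
- by move=> h; apply: ii_iii; apply: i_ii'; apply: iii'_i.
Qed.
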